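(* Let $1\le q\le k$, $n\ge 2$, $f\in P_1^{k,q}$, $a\in E_k$ with $\gcd(a,k)=1$, $b_1,\dots,b_n\in E_k$, $g_i(x_i)=[a\,f(x_i)+b_i]\bmod k$ for $i=1,\dots,n$, and $h(x_1,\dots,x_n)=[g_1(x_1)+\dots+g_n(x_n)]\bmod k$. Let $1<t\le n$ with $\gcd(t,k)=1$. Then identifying any $t$ distinct variables of $h$ (substituting one common variable $z$ — new or one of them — for all of them) yields, as a function of $z$ and the remaining $n-t$ variables, an $H(q)$-function belonging to $P_{n-t+1}^k$.
   Context: $E_k=\{0,1,\dots,k-1\}$, $k\ge 2$, with arithmetic modulo $k$. $P_m^k$ is the set of all functions $E_k^m\to E_k$; $P_1^{k,q}$ is the set of functions $E_k\to E_k$ taking exactly $q$ distinct values. For a variable $x$ of a function $g$, $\mathrm{Spr}(x,g)$ is the set of numbers of distinct values of all one-variable functions obtained from $g$ by fixing all variables other than $x$ to constants (for a function of the single variable $x$, this is $\{$number of its distinct values$\}$). A function $g$ is an $H(q)$-function if $\mathrm{Spr}(x,g)=\{q\}$ for every variable $x$ of $g$. *)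

(* Defs.v *)
(* E_k is modelled as 'Z_k (with hypothesis 1 < k, so 'Z_k = 'I_k
   with arithmetic modulo k). A function in P_m^k is a map {ffun 'I_m -> 'Z_k} -> 'Z_k. *)
From HB Require Import structures.
From mathcomp Require Import all_boot all_order all_algebra.
Set Implicit Arguments. Unset Strict Implicit. Unset Printing Implicit Defensive.
Import GRing.Theory.

Definition upd (m : nat) (T : Type) (x : {ffun 'I_m -> T}) (i : 'I_m) (c : T)
  : {ffun 'I_m -> T} := [ffun j => if j == i then c else x j].

Definition Spr (m k : nat) (g : {ffun 'I_m -> 'Z_k} -> 'Z_k) (i : 'I_m) : pred nat :=
  fun s => [exists x : {ffun 'I_m -> 'Z_k}, #|[set g (upd x i c) | c : 'Z_k]| == s].

Definition H_fun (q m k : nat) (g : {ffun 'I_m -> 'Z_k} -> 'Z_k) : Prop :=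
  forall (i : 'I_m) (s : nat), Spr g i s = (s == q).

(* Main.v *)
Require Import Defs.
From HB Require Import structures.
From mathcomp Require Import all_boot all_order all_algebra.
Import GRing.Theory.
Local Open Scope ring_scope.

Lemma card_affine (k : nat) (u C : 'Z_k) (f : 'Z_k -> 'Z_k) :
  u \is a GRing.unit ->
  #|[set u * f c + C | c : 'Z_k]| = #|[set f x | x : 'Z_k]|.
Proof.
move=> Hu.
have -> : [set u * f c + C | c : 'Z_k] = (fun v => u * v + C) @: [set f x | x : 'Z_k].
  by rewrite -imset_comp.
rewrite card_imset // => v w /addIr; exact: mulrI.
Qed.

Lemma unit_mult (k : nat) (a : 'Z_k) (m : nat) :
  (1 < k)%N -> coprime a k -> coprime m k -> a *+ m \is a GRing.unit.
Proof.
move=> k1 ca cm.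
have -> : a *+ m = ((a : nat) * m)%:R :> 'Z_k by rewrite natrM mulr_natr natr_Zp.
by rewrite unitZpE // coprime_sym coprimeMl ca cm.
Qed.

Theorem corollary2p9 (k q n : nat) (f : 'Z_k -> 'Z_k) (a : 'Z_k) (b : 'I_n -> 'Z_k)
    (t : nat) (S : {set 'I_n}) (sigma : 'I_n -> 'I_(n - t).+1) :
  (1 < k)%N -> (1 <= q <= k)%N -> (2 <= n)%N ->
  #|[set f x | x : 'Z_k]| = q ->
  coprime a k ->
  (1 < t <= n)%N -> coprime t k ->
  #|S| = t ->
  (forall i j : 'I_n, (sigma i == sigma j) = (i == j) || ((i \in S) && (j \in S))) ->
  let g := fun (i : 'I_n) (x : 'Z_k) => a * f x + b i in
  let h := fun x : {ffun 'I_n -> 'Z_k} => \sum_(i < n) g i (x i) in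
  H_fun q (fun y : {ffun 'I_(n - t).+1 -> 'Z_k} => h [ffun i => y (sigma i)]).
Proof.
move=> k1 _ _ Hq ca /andP[t1 tn] ct cS Hs g h.
have [s0 s0S] : exists s0, s0 \in S.
  apply/set0Pn; rewrite -card_gt0 cS; exact: ltnW.
have surj : forall j, exists i0, sigma i0 = j.
  pose A := sigma @: ~: S.
  have cA : #|A| = (n - t)%N.
    rewrite card_in_imset; last first.
      move=> i j; rewrite !inE => iS jS /eqP; rewrite Hs (negbTE iS) /= orbF.
      by move/eqP.
    by rewrite cardsCs setCK card_ord cS.
  have nA : sigma s0 \notin A.
    apply/imsetP => -[i]; rewrite inE => iS /eqP; rewrite eq_sym Hs s0S (negbTE iS) /= orbF.
    by move/eqP => E; rewrite E s0S in iS.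
  have full : sigma s0 |: A = [set: 'I_(n - t).+1].
    apply/eqP; rewrite eqEcard subsetT cardsU1 nA cA cardsT card_ord /=.
    by rewrite add1n.
  move=> j; have : j \in sigma s0 |: A by rewrite full inE.
  case/setU1P => [->|/imsetP[i _ ->]]; [by exists s0 | by exists i].
have key : forall (x : {ffun 'I_(n - t).+1 -> 'Z_k}) j,
    #|[set h [ffun i => upd x j c (sigma i)] | c : 'Z_k]| = q.
  move=> x j.
  pose m := #|[pred i | sigma i == j]|.
  have cm : coprime m k.
    rewrite /m; have [i0 <-] := surj j.
    case: (boolP (i0 \in S)) => i0S.
      suff -> : #|[pred i | sigma i == sigma i0]| = t by [].
      apply: (etrans _ cS); apply: eq_card => i; rewrite inE /= Hs i0S andbT.
      by apply/orP/idP => [[/eqP->|]|] //; right.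
    suff -> : #|[pred i | sigma i == sigma i0]| = 1%N by rewrite coprime1n.
    rewrite -(card1 i0); apply: eq_card => i; rewrite inE /= Hs (negbTE i0S) andbF orbF.
    by [].
  pose C := \sum_(i < n | sigma i == j) b i + \sum_(i < n | sigma i != j) g i (x (sigma i)).
  have E : forall c, h [ffun i => upd x j c (sigma i)] = (a *+ m) * f c + C.
    move=> c; rewrite /h (bigID (fun i => sigma i == j)) /=.
    rewrite /C addrA; congr (_ + _); last first.
      by apply: eq_bigr => i /negbTE H; rewrite ffunE /upd ffunE H.
    rewrite (eq_bigr (fun i => a * f c + b i)); last first.
      by move=> i H; rewrite ffunE /upd ffunE H.
    by rewrite big_split /= sumr_const mulrnAl.
  rewrite (eq_imset _ E) card_affine ?Hq //; exact: unit_mult.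
move=> i s; rewrite /Spr; apply/existsP/eqP.
  by case=> x /eqP <-; rewrite key.
move=> ->; exists [ffun=> 0]; apply/eqP.
by rewrite -(key [ffun=> 0] i); congr (#|_|); apply: eq_imset => c; congr h; apply/ffunP=> l; rewrite !ffunE.
Qed.
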